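(* For any $\mu>-1$ and $0<x<2\pi$ the following identities (with $x$-independent right-hand sides) hold: \[ \Im\big(e^{ix\mu}L(x,\mu)\big)+\int_0^{x}\frac{\sin(\mu+\frac{1}{2})y}{2\sin \frac{y}{2}}\,dy=\frac{\pi}{2} \] and \[ \Re\big(e^{ix\mu}L(x,\mu)\big)-\int_x^\pi\frac{\cos(\mu+\frac{1}{2})y\,dy}{2\sin\frac{y}{2}} =\Re\big(e^{i\pi\mu}T(\pi,\mu)\big)=-\mathrm{S}_{\pi/2}(2\mu+1)\,\cos\pi\mu . \]
   Context: $L(x,\mu)=\sum_{k=1}^\infty \frac{e^{ikx}}{k+\mu}$, with real part the cosine FJ sum $T(x,\mu)=\sum_{k=1}^\infty\frac{\cos kx}{k+\mu}$. The special value $\mathrm{S}_{\pi/2}(\lambda)=2\sum_{k=1}^\infty \frac{(-1)^{k-1}}{2k-1+\lambda}=-T\left(\pi,\frac{\lambda-1}{2}\right)$ (equivalently the imaginary part of $2\sum_{k\ge1}\frac{e^{(2k-1)i\pi/2}}{2k-1+\lambda}$). *)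

(* Defs.v *)
From Stdlib Require Import Reals.
From Coquelicot Require Export Coquelicot.
Open Scope R_scope.

Definition cis (t : R) : C := (cos t, sin t).

(* T(x,mu) = sum_{k>=1} cos(kx)/(k+mu)  (index shifted: k = n+1) *)
Definition T (x mu : R) : R :=
  Series (fun n : nat => cos (INR (S n) * x) / (INR (S n) + mu)).

Definition Tsin (x mu : R) : R :=
  Series (fun n : nat => sin (INR (S n) * x) / (INR (S n) + mu)).

(* L(x,mu) = sum_{k>=1} e^{ikx}/(k+mu), computed componentwise *)
Definition L (x mu : R) : C := (T x mu, Tsin x mu).

Definition S_pi2 (lam : R) : R :=
  2 * Series (fun n : nat => (-1) ^ n / (2 * INR (S n) - 1 + lam)).

(* Main.v *)
Require Import Defs.
From Stdlib Require Import Reals Lra.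
From Coquelicot Require Import Coquelicot.
Open Scope R_scope.

Lemma exR (f : R -> R) a b : a <= b -> (forall z, a <= z <= b -> continuous f z) -> ex_RInt f a b.
Proof.
  intros Hab H. apply (ex_RInt_continuous (V := R_CompleteNormedModule)). rewrite Rmin_left, Rmax_right; auto.
Qed.

Lemma cont_sin_lin w c y : continuous (fun y => sin (w*y + c)) y.
Proof. apply (ex_derive_continuous (K:=R_AbsRing) (V:=R_NormedModule)). auto_derive. auto. Qed.

Lemma abs_sin_le x : Rabs (sin x) <= 1.
Proof. apply Rabs_le. apply SIN_bound. Qed.
Lemma abs_cos_le x : Rabs (cos x) <= 1.
Proof. apply Rabs_le. apply COS_bound. Qed.

Lemma RL (g : R -> R) (a b r c : R) : a <= b -> 0 < r ->
  (forall y, a - r <= y <= b -> continuous g y) ->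
  forall eps, 0 < eps -> exists W, forall w, W <= w ->
    Rabs (RInt (fun y => g y * sin (w*y + c)) a b) < eps.
Proof.
  intros Hab Hr Hg eps Heps.
  assert (Hgp : forall y, a - r <= y <= b -> continuity_pt g y).
  { intros y Hy. apply continuity_pt_filterlim. apply Hg; auto. }
  destruct (continuity_ab_maj (fun y => Rabs (g y)) (a - r) b) as [Mx [HM HMx]].
  { lra. }
  { intros y Hy. apply continuity_pt_filterlim.
    apply (continuous_comp g Rabs). apply Hg; auto.
    apply continuity_pt_filterlim. apply Rcontinuity_abs. }
  set (B := Rabs (g Mx)) in *.
  assert (HB0 : 0 <= B) by apply Rabs_pos.
  assert (He' : 0 < eps / (b - a + 1)) by (apply Rdiv_lt_0_compat; lra).
  destruct (Heine g (fun y => a - r <= y <= b) (compact_P3 _ _) Hgp (mkposreal _ He')) as [d Hd].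
  exists (PI / r + PI / d + 2 * PI * B / eps + 1).
  intros w Hw.
  assert (HPI := PI_RGT_0).
  assert (Hd0 := cond_pos d).
  assert (H1 : 0 <= PI / r) by (apply Rlt_le, Rdiv_lt_0_compat; lra).
  assert (H2 : 0 <= PI / d) by (apply Rlt_le, Rdiv_lt_0_compat; lra).
  assert (H3 : 0 <= 2 * PI * B / eps).
  { apply Rmult_le_pos. nra. apply Rlt_le, Rinv_0_lt_compat; lra. }
  assert (Hw0 : 0 < w) by lra.
  set (h := PI / w).
  assert (Hh0 : 0 < h) by (apply Rdiv_lt_0_compat; lra).
  assert (Hhr : h <= r).
  { unfold h. apply (Rmult_le_reg_r w); [lra|]. unfold Rdiv. rewrite Rmult_assoc, Rinv_l by lra.
    assert (PI / r * r = PI) by (field; lra).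
    assert (PI / r <= w) by lra. nra. }
  assert (Hhd : h < d).
  { unfold h. apply (Rmult_lt_reg_r w); [lra|]. unfold Rdiv. rewrite Rmult_assoc, Rinv_l by lra.
    assert (PI / d * d = PI) by (field; lra).
    assert (PI / d < w) by lra. nra. }
  assert (HhB : h * B <= eps / 2).
  { unfold h. apply (Rmult_le_reg_r w); [lra|].
    replace (PI / w * B * w) with (PI * B) by (field; lra).
    assert (2 * PI * B / eps * eps = 2 * PI * B) by (field; lra).
    assert (2 * PI * B / eps <= w) by lra.
    assert (2 * PI * B <= w * eps) by nra. lra. }
  set (f1 := fun y => g y * sin (w*y + c)).
  assert (Cf1 : forall y, a - r <= y <= b -> continuous f1 y).
  { intros y Hy. apply (continuous_mult g (fun y => sin (w*y+c))). apply Hg; auto. apply cont_sin_lin. }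
  assert (Bf1 : forall y, a - r <= y <= b -> Rabs (f1 y) <= B).
  { intros y Hy. unfold f1. rewrite Rabs_mult. specialize (HM y Hy). simpl in HM.
    assert (Rabs (sin (w*y+c)) <= 1) by apply abs_sin_le.
    assert (0 <= Rabs (g y)) by apply Rabs_pos.
    assert (0 <= Rabs (sin (w*y+c))) by apply Rabs_pos. nra. }
  change (Rabs (RInt f1 a b) < eps).
  destruct (Rle_lt_dec (b - a) h) as [Hs|Hl].
  {
    assert (HR := abs_RInt_le_const f1 a b B Hab (exR f1 a b Hab (fun z Hz => Cf1 z ltac:(lra)))
       (fun t Ht => Bf1 t ltac:(lra))).
    assert ((b - a) * B <= h * B) by nra. lra. }
  set (f2 := fun y => g (y + h) * sin (w*y + c)).
  assert (Cf2 : forall y, a - h <= y <= b - h -> continuous f2 y).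
  { intros y Hy. apply (continuous_mult (fun y => g (y+h)) (fun y => sin (w*y+c))).
    apply (continuous_comp (fun y => y + h) g).
    apply (continuous_plus (fun y => y) (fun _ => h)). apply continuous_id. apply continuous_const.
    apply Hg; lra. apply cont_sin_lin. }
  assert (Ex1 : forall u v, a <= u <= v -> v <= b -> ex_RInt f1 u v).
  { intros u v Hu Hv. apply exR. lra. intros; apply Cf1; lra. }
  assert (Ex2 : forall u v, a - h <= u <= v -> v <= b - h -> ex_RInt f2 u v).
  { intros u v Hu Hv. apply exR. lra. intros; apply Cf2; lra. }
  assert (Hshift : RInt f1 a b = - RInt f2 (a - h) (b - h)).
  { assert (E := RInt_comp_lin f1 1 h (a - h) (b - h)).
    replace (1 * (a - h) + h) with a in E by ring.
    replace (1 * (b - h) + h) with b in E by ring.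
    rewrite <- E by (apply Ex1; lra).
    change (- RInt f2 (a - h) (b - h)) with (@opp R_AbelianGroup (RInt f2 (a - h) (b - h))).
    rewrite <- (RInt_opp (V:=R_CompleteNormedModule)) by (apply Ex2; lra).
    apply RInt_ext. intros y _. unfold f1, f2, scal; simpl. unfold mult, opp; simpl.
    replace (w * (1 * y + h) + c) with ((w * y + c) + PI).
    rewrite neg_sin. replace (1*y+h) with (y+h) by ring. ring.
    unfold h. field. lra. }
  assert (C1 : RInt f1 a b = RInt f1 a (b-h) + RInt f1 (b-h) b).
  { symmetry. apply (RInt_Chasles (V:=R_CompleteNormedModule)); apply Ex1; lra. }
  assert (C2 : RInt f2 (a-h) (b-h) = RInt f2 (a-h) a + RInt f2 a (b-h)).
  { symmetry. apply (RInt_Chasles (V:=R_CompleteNormedModule)); apply Ex2; lra. }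
  assert (Hm : RInt f1 a (b - h) - RInt f2 a (b - h) = RInt (fun y => f1 y - f2 y) a (b - h)).
  { symmetry. apply (RInt_minus f1 f2). apply Ex1; lra. apply Ex2; lra. }
  assert (HA := abs_RInt_le_const (fun y => f1 y - f2 y) a (b - h) (eps / (b - a + 1)) ltac:(lra)).
  assert (HA' : Rabs (RInt (fun y => f1 y - f2 y) a (b - h)) <= (b - h - a) * (eps / (b - a + 1))).
  { apply HA.
    { apply exR. lra. intros z Hz. apply (continuous_minus f1 f2). apply Cf1; lra. apply Cf2; lra. }
    intros t Ht. unfold f1, f2.
    replace (g t * sin (w * t + c) - g (t + h) * sin (w * t + c)) with ((g t - g (t+h)) * sin (w*t+c)) by ring.
    rewrite Rabs_mult.
    assert (Rabs (g t - g (t + h)) < eps / (b - a + 1)).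
    { apply (Hd t (t+h)); try lra. simpl. rewrite Rabs_left by lra. lra. }
    assert (Rabs (sin (w*t+c)) <= 1) by apply abs_sin_le.
    assert (0 <= Rabs (g t - g (t+h))) by apply Rabs_pos.
    assert (0 <= Rabs (sin (w*t+c))) by apply Rabs_pos. nra. }
  assert (HB1 : Rabs (RInt f1 (b - h) b) <= (b - (b - h)) * B).
  { apply abs_RInt_le_const. lra. apply Ex1; lra. intros; apply Bf1; lra. }
  assert (HB2 : Rabs (RInt f2 (a - h) a) <= (a - (a - h)) * B).
  { apply abs_RInt_le_const. lra. apply Ex2; lra. intros t Ht. unfold f2.
    rewrite Rabs_mult. specialize (HM (t+h) ltac:(lra)). simpl in HM.
    assert (Rabs (sin (w*t+c)) <= 1) by apply abs_sin_le.
    assert (0 <= Rabs (g (t+h))) by apply Rabs_pos.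
    assert (0 <= Rabs (sin (w*t+c))) by apply Rabs_pos. nra. }
  assert (Hlt : (b - h - a) * (eps / (b - a + 1)) < eps).
  { assert (eps / (b - a + 1) * (b - a + 1) = eps) by (field; lra).
    assert (0 <= b - h - a) by lra. nra. }
  assert (E2 : 2 * RInt f1 a b = RInt (fun y => f1 y - f2 y) a (b - h) + RInt f1 (b - h) b - RInt f2 (a - h) a).
  { rewrite <- Hm. lra. }
  assert (Rabs (2 * RInt f1 a b) < 2 * eps).
  { rewrite E2. 
    eapply Rle_lt_trans. apply Rabs_triang. 
    eapply Rle_lt_trans. apply Rplus_le_compat_l. rewrite Rabs_Ropp. apply Rle_refl.
    eapply Rle_lt_trans. apply Rplus_le_compat_r. apply Rabs_triang. lra. }
  rewrite Rabs_mult, Rabs_right in H by lra. lra.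
Qed.

Lemma RL_seq (g : R -> R) a b r c beta : a <= b -> 0 < r ->
  (forall y, a - r <= y <= b -> continuous g y) ->
  is_lim_seq (fun N => RInt (fun y => g y * sin ((INR N + beta) * y + c)) a b) 0.
Proof.
  intros Hab Hr Hg. apply is_lim_seq_spec. intros eps.
  destruct (RL g a b r c Hab Hr Hg eps (cond_pos eps)) as [W HW].
  destruct (nfloor_ex (Rmax 0 (W - beta)) (Rmax_l _ _)) as [n Hn].
  exists (S n). intros m Hm. rewrite Rminus_0_r. apply HW.
  apply le_INR in Hm. rewrite S_INR in Hm.
  assert (W - beta <= Rmax 0 (W - beta)) by apply Rmax_r. lra.
Qed.

Lemma RL_seq' (g : R -> R) a b r c beta : 0 < r ->
  (forall y, Rmin a b - r <= y <= Rmax a b -> continuous g y) ->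
  is_lim_seq (fun N => RInt (fun y => g y * sin ((INR N + beta) * y + c)) a b) 0.
Proof.
  intros Hr Hg. destruct (Rle_dec a b) as [Hab|Hab].
  - rewrite Rmin_left, Rmax_right in Hg by lra. now apply (RL_seq g a b r c beta).
  - rewrite Rmin_right, Rmax_left in Hg by lra.
    assert (H := RL_seq g b a r c beta ltac:(lra) Hr Hg).
    apply is_lim_seq_ext with (fun N => - RInt (fun y => g y * sin ((INR N + beta) * y + c)) b a).
    + intros N. rewrite <- (opp_RInt_swap (V:=R_CompleteNormedModule) _ a b). unfold opp; simpl; ring.
      apply (ex_RInt_continuous (V := R_CompleteNormedModule)). rewrite Rmin_right, Rmax_left by lra. intros z Hz. apply (continuous_mult g (fun y => sin ((INR N + beta)*y+c))).
      apply Hg; lra. apply cont_sin_lin.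
    + replace 0 with (- 0) by ring. apply (is_lim_seq_opp _ 0). exact H.
Qed.


Lemma cont_mul (f g : R -> R) y : continuous f y -> continuous g y -> continuous (fun y => f y * g y) y.
Proof. intros. apply (continuous_mult f g); auto. Qed.
Lemma cont_plus (f g : R -> R) y : continuous f y -> continuous g y -> continuous (fun y => f y + g y) y.
Proof. intros. apply (continuous_plus f g); auto. Qed.
Lemma cont_opp (f : R -> R) y : continuous f y -> continuous (fun y => - f y) y.
Proof. intros. apply (continuous_opp f); auto. Qed.
Lemma cont_inv (f : R -> R) y : continuous f y -> f y <> 0 -> continuous (fun y => / f y) y.
Proof. intros. apply (continuous_Rinv_comp f); auto. Qed.
Lemma cont_cst (c : R) y : continuous (fun _ : R => c) y.
Proof. apply continuous_const. Qed.
Lemma cont_comp_lin (f : R -> R) a b y : continuous f (a*y+b) -> continuous (fun y => f (a*y+b)) y.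
Proof. intros H. apply (continuous_comp (fun y => a*y+b) f); auto.
  apply (ex_derive_continuous (K:=R_AbsRing) (V:=R_NormedModule)). auto_derive. auto. Qed.
Lemma cont_comp_d (f g : R -> R) y : ex_derive g y -> continuous f (g y) -> continuous (fun y => f (g y)) y.
Proof. intros Hg H. apply (continuous_comp g f); auto.
  apply (ex_derive_continuous (K:=R_AbsRing) (V:=R_NormedModule)). auto. Qed.
Lemma cont_sin y : continuous sin y.
Proof. apply (ex_derive_continuous (K:=R_AbsRing) (V:=R_NormedModule)). auto_derive. auto. Qed.
Lemma cont_cos y : continuous cos y.
Proof. apply (ex_derive_continuous (K:=R_AbsRing) (V:=R_NormedModule)). auto_derive. auto. Qed.

Definition sinc (y : R) : R := if Req_EM_T y 0 then 1 else sin y / y.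

Lemma sinc_eq y : y <> 0 -> sinc y = sin y / y.
Proof. intros H. unfold sinc. destruct (Req_EM_T y 0); [contradiction|reflexivity]. Qed.

Lemma sinc_0 : sinc 0 = 1.
Proof. unfold sinc. destruct (Req_EM_T 0 0); [reflexivity|contradiction]. Qed.

Lemma mul_sinc z : z * sinc z = sin z.
Proof. destruct (Req_EM_T z 0) as [->|H]. rewrite sin_0; ring. rewrite sinc_eq by auto. field; auto. Qed.

Lemma cont_sinc y : continuous sinc y.
Proof.
  destruct (Req_EM_T y 0) as [->|Hy].
  - apply continuity_pt_filterlim. unfold continuity_pt, continue_in, limit1_in, limit_in.
    intros eps Heps. destruct (derivable_pt_lim_sin 0 eps Heps) as [d Hd].
    exists d. split. apply cond_pos. intros x [[_ Hx0] Hx]. simpl in *. unfold R_dist in *.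
    rewrite sinc_0. rewrite sinc_eq by auto.
    specialize (Hd x (not_eq_sym Hx0) ltac:(rewrite Rminus_0_r in Hx; exact Hx)).
    rewrite Rplus_0_l, sin_0, cos_0, Rminus_0_r in Hd. exact Hd.
  - apply (continuous_ext_loc sinc (fun z => sin z * / z) y).
    + assert (Hp : 0 < Rabs y) by (apply Rabs_pos_lt; auto).
      exists (mkposreal _ Hp). intros z Hz. 
      unfold ball in Hz; simpl in Hz; unfold AbsRing_ball, abs, minus, plus, opp in Hz; simpl in Hz.
      assert (z <> 0).
      { intros ->. rewrite Rplus_0_l, Rabs_Ropp in Hz. lra. }
      rewrite sinc_eq by auto. reflexivity.
    + apply cont_mul. apply cont_sin. apply cont_inv. apply continuous_id. auto.
Qed.

Lemma sinc_half_pos y : -2*PI < y < 2*PI -> 0 < sinc (y/2).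
Proof.
  intros Hy. destruct (Req_EM_T y 0) as [->|H0].
  { replace (0/2) with 0 by field. rewrite sinc_0. lra. }
  rewrite sinc_eq by lra.
  destruct (Rlt_le_dec 0 y).
  - apply Rdiv_lt_0_compat. apply sin_gt_0; lra. lra.
  - replace (sin (y/2) / (y/2)) with (sin (-(y/2)) / (-(y/2))).
    apply Rdiv_lt_0_compat. apply sin_gt_0; lra. lra.
    rewrite sin_neg. field. lra.
Qed.

Definition K (c y : R) : R := c * sinc (c*y) / sinc (y/2).

Lemma K_eq c y : y <> 0 -> sin (y/2) <> 0 -> K c y = sin (c*y) / (2 * sin (y/2)).
Proof.
  intros Hy Hs. unfold K. rewrite (sinc_eq (y/2)) by lra.
  assert (E : c * sinc (c*y) = sin (c*y) / y).
  { rewrite <- mul_sinc. field. auto. }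
  rewrite E. field. auto.
Qed.

Lemma cont_K c y : -2*PI < y < 2*PI -> continuous (K c) y.
Proof.
  intros Hy. unfold K, Rdiv. apply cont_mul.
  - apply cont_mul. apply cont_cst. 
    apply (cont_comp_d sinc (fun y => c*y)). auto_derive; auto. apply cont_sinc.
  - apply cont_inv. apply (cont_comp_d sinc (fun y => y/2)). auto_derive; auto. apply cont_sinc.
    assert (H := sinc_half_pos y Hy). unfold Rdiv in H. lra.
Qed.

Definition G2 (mu y : R) : R := - (mu * sin (mu/2*y) * sinc (mu/2*y)) / sinc (y/2).

Lemma G2_eq mu y : y <> 0 -> sin (y/2) <> 0 -> G2 mu y = (cos (mu*y) - 1) / (2 * sin (y/2)).
Proof.
  intros Hy Hs. unfold G2. rewrite (sinc_eq (y/2)) by lra.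
  assert (E : mu * sinc (mu/2*y) = 2 * sin (mu/2*y) / y).
  { rewrite <- mul_sinc. field. auto. }
  replace (mu * sin (mu / 2 * y) * sinc (mu / 2 * y)) with (sin (mu/2*y) * (mu * sinc (mu/2*y))) by ring.
  rewrite E. replace (mu*y) with (2*(mu/2*y)) by field. rewrite cos_2a_sin. field. auto.
Qed.

Lemma cont_G2 mu y : -2*PI < y < 2*PI -> continuous (G2 mu) y.
Proof.
  intros Hy. unfold G2, Rdiv. apply cont_mul.
  - apply cont_opp. apply cont_mul. apply cont_mul. apply cont_cst.
    apply (cont_comp_d sin (fun y => mu/2*y)). auto_derive; auto. apply cont_sin.
    apply (cont_comp_d sinc (fun y => mu/2*y)). auto_derive; auto. apply cont_sinc.
  - apply cont_inv. apply (cont_comp_d sinc (fun y => y/2)). auto_derive; auto. apply cont_sinc.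
    assert (H := sinc_half_pos y Hy). unfold Rdiv in H. lra.
Qed.

Lemma sum_Sn_R (a : nat -> R) n : sum_n a (S n) = sum_n a n + a (S n).
Proof. apply (sum_Sn (G:=R_AbelianMonoid)). Qed.

Lemma tele_cos nu y N :
  2 * sin (y/2) * sum_n (fun n => cos ((INR (S n) + nu) * y)) N
  = sin ((INR (S N) + nu + 1/2) * y) - sin ((nu + 1/2) * y).
Proof.
  assert (Hid : forall c, 2 * sin (y/2) * cos (c*y) = sin ((c + 1/2)*y) - sin ((c - 1/2)*y)).
  { intros c. replace ((c+1/2)*y) with (c*y + y/2) by field. replace ((c-1/2)*y) with (c*y - y/2) by field.
    rewrite sin_plus, sin_minus. ring. }
  induction N as [|N IH].
  - rewrite sum_O. rewrite Hid. f_equal. f_equal. simpl. lra.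
  - rewrite sum_Sn_R. rewrite Rmult_plus_distr_l, IH, Hid.
    rewrite !S_INR. replace (INR N + 1 + 1 + nu - 1 / 2) with (INR N + 1 + nu + 1 / 2) by field. ring.
Qed.

Lemma tele_sin nu y N :
  2 * sin (y/2) * sum_n (fun n => sin ((INR (S n) + nu) * y)) N
  = cos ((nu + 1/2) * y) - cos ((INR (S N) + nu + 1/2) * y).
Proof.
  assert (Hid : forall c, 2 * sin (y/2) * sin (c*y) = cos ((c - 1/2)*y) - cos ((c + 1/2)*y)).
  { intros c. replace ((c+1/2)*y) with (c*y + y/2) by field. replace ((c-1/2)*y) with (c*y - y/2) by field.
    rewrite cos_plus, cos_minus. ring. }
  induction N as [|N IH].
  - rewrite sum_O. rewrite Hid. f_equal. f_equal. simpl. lra.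
  - rewrite sum_Sn_R. rewrite Rmult_plus_distr_l, IH, Hid.
    rewrite !S_INR. replace ((INR N + 1 + 1 + nu - 1/2)) with (INR N + 1 + nu + 1/2) by field. ring.
Qed.

Lemma int_cos nu a b N : -1 < nu ->
  is_RInt (fun y => sum_n (fun n => cos ((INR (S n) + nu) * y)) N) a b
    (sum_n (fun n => (sin ((INR (S n) + nu) * b) - sin ((INR (S n) + nu) * a)) / (INR (S n) + nu)) N).
Proof.
  intros Hnu.
  assert (Hterm : forall n, is_RInt (fun y => cos ((INR (S n) + nu) * y)) a b
     ((sin ((INR (S n) + nu) * b) - sin ((INR (S n) + nu) * a)) / (INR (S n) + nu))).
  { intros n. assert (Hc : 0 < INR (S n) + nu) by (rewrite S_INR; assert (H := pos_INR n); lra).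
    set (c := INR (S n) + nu) in *.
    assert (H := is_RInt_derive (V:=R_CompleteNormedModule) (fun y => sin (c*y) / c) (fun y => cos (c*y)) a b).
    replace ((sin (c * b) - sin (c * a)) / c) with (minus (sin (c*b)/c) (sin (c*a)/c)).
    apply H.
    - intros x _. auto_derive. auto. field. lra.
    - intros x _. apply (cont_comp_d cos (fun y => c*y)). auto_derive; auto. apply cont_cos.
    - unfold minus, plus, opp; simpl. field. lra. }
  induction N as [|N IH].
  - apply (is_RInt_ext (V:=R_NormedModule) (fun y => cos ((INR 1 + nu) * y))).
    intros; rewrite sum_O; auto. rewrite sum_O. apply Hterm.
  - apply (is_RInt_ext (V:=R_NormedModule)
      (fun y => plus (sum_n (fun n => cos ((INR (S n) + nu) * y)) N) (cos ((INR (S (S N)) + nu) * y)))).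
    intros; rewrite sum_Sn_R; reflexivity. rewrite sum_Sn_R. apply (is_RInt_plus (V:=R_NormedModule)). apply IH. apply Hterm.
Qed.

Lemma int_sin nu a b N : -1 < nu ->
  is_RInt (fun y => sum_n (fun n => sin ((INR (S n) + nu) * y)) N) a b
    (sum_n (fun n => (cos ((INR (S n) + nu) * a) - cos ((INR (S n) + nu) * b)) / (INR (S n) + nu)) N).
Proof.
  intros Hnu.
  assert (Hterm : forall n, is_RInt (fun y => sin ((INR (S n) + nu) * y)) a b
     ((cos ((INR (S n) + nu) * a) - cos ((INR (S n) + nu) * b)) / (INR (S n) + nu))).
  { intros n. assert (Hc : 0 < INR (S n) + nu) by (rewrite S_INR; assert (H := pos_INR n); lra).
    set (c := INR (S n) + nu) in *.
    assert (H := is_RInt_derive (V:=R_CompleteNormedModule) (fun y => - cos (c*y) / c) (fun y => sin (c*y)) a b).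
    replace ((cos (c * a) - cos (c * b)) / c) with (minus (- cos (c*b)/c) (- cos (c*a)/c)).
    apply H.
    - intros x _. auto_derive. auto. field. lra.
    - intros x _. apply (cont_comp_d sin (fun y => c*y)). auto_derive; auto. apply cont_sin.
    - unfold minus, plus, opp; simpl. field. lra. }
  induction N as [|N IH].
  - apply (is_RInt_ext (V:=R_NormedModule) (fun y => sin ((INR 1 + nu) * y))).
    intros; rewrite sum_O; auto. rewrite sum_O. apply Hterm.
  - apply (is_RInt_ext (V:=R_NormedModule)
      (fun y => plus (sum_n (fun n => sin ((INR (S n) + nu) * y)) N) (sin ((INR (S (S N)) + nu) * y)))).
    intros; rewrite sum_Sn_R; reflexivity. rewrite sum_Sn_R. apply (is_RInt_plus (V:=R_NormedModule)). apply IH. apply Hterm.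
Qed.


Ltac toR := lazymatch goal with |- ?a = ?b => change (@eq R a b) end.

Lemma sum_O_R (a : nat -> R) : sum_n a 0 = a 0%nat.
Proof. apply (sum_O (G:=R_AbelianMonoid)). Qed.

Lemma sum_n_lin (u v : nat -> R) al be N :
  sum_n (fun n => al * u n + be * v n) N = al * sum_n u N + be * sum_n v N.
Proof.
  induction N as [|N IH]. rewrite !sum_O_R. toR; ring.
  rewrite !sum_Sn_R, IH. toR; ring.
Qed.

Lemma half_pos_sin y : 0 < y < 2*PI -> 0 < sin (y/2).
Proof. intros. apply sin_gt_0; lra. Qed.

Lemma exRm (f : R -> R) a b : (forall z, Rmin a b <= z <= Rmax a b -> continuous f z) -> ex_RInt f a b.
Proof. intros H. apply (ex_RInt_continuous (V := R_CompleteNormedModule)). auto. Qed.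

Lemma cont_invD y : 0 < y < 2*PI -> continuous (fun y => / (2 * sin (y/2))) y.
Proof.
  intros Hy. apply cont_inv. apply cont_mul. apply cont_cst.
  apply (cont_comp_d sin (fun y => y/2)). auto_derive; auto. apply cont_sin.
  assert (H := half_pos_sin y Hy). lra.
Qed.

Lemma sin_shift2 z : sin (z + PI/2) = cos z.
Proof. rewrite sin_plus, sin_PI2, cos_PI2. ring. Qed.

Lemma sin_INR_PI k : sin (INR k * PI) = 0.
Proof.
  induction k as [|k IH]. simpl. rewrite Rmult_0_l. apply sin_0.
  rewrite S_INR, Rmult_plus_distr_r, Rmult_1_l, neg_sin, IH. ring.
Qed.

Lemma cos_INR_PI k : cos (INR k * PI) = (-1) ^ k.
Proof.
  induction k as [|k IH]. simpl. rewrite Rmult_0_l. apply cos_0.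
  rewrite S_INR, Rmult_plus_distr_r, Rmult_1_l, neg_cos, IH. simpl. ring.
Qed.

Lemma sum_n_zero N : sum_n (fun _ : nat => 0) N = 0.
Proof. induction N as [|N IH]. apply sum_O_R. rewrite sum_Sn_R, IH. toR; ring. Qed.

Section A.
Variables mu x : R.
Hypothesis hmu : -1 < mu.
Hypothesis hx : 0 < x < 2*PI.

Let c n := INR (S n) + mu.

Lemma IN_eq N : sum_n (fun n => sin ((INR (S n) + mu) * x) / (INR (S n) + mu)) N
  = RInt (K (INR (S N) + mu + 1/2)) 0 x - RInt (K (mu + 1/2)) 0 x.
Proof.
  assert (H := int_cos mu 0 x N hmu).
  assert (H2 : is_RInt (fun y => K (INR (S N) + mu + 1/2) y - K (mu + 1/2) y) 0 x
     (sum_n (fun n => sin ((INR (S n) + mu) * x) / (INR (S n) + mu)) N)).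
  { apply (is_RInt_ext (V:=R_NormedModule) (fun y => sum_n (fun n => cos ((INR (S n) + mu) * y)) N)).
    - rewrite Rmin_left, Rmax_right by lra. intros y Hy.
      assert (Hs := half_pos_sin y ltac:(lra)).
      rewrite !K_eq by lra. assert (T := tele_cos mu y N). 
      apply (Rmult_eq_reg_l (2 * sin (y/2))); [|lra]. rewrite T. field. lra.
    - erewrite sum_n_ext. apply H. intros n. cbv beta. rewrite Rmult_0_r, sin_0. toR. field.
      rewrite S_INR. assert (H0 := pos_INR n). lra. }
  apply (is_RInt_unique (V:=R_CompleteNormedModule)) in H2. rewrite <- H2.
  apply (RInt_minus (V:=R_CompleteNormedModule) (K _) (K _)).
  - apply exR. lra. intros; apply cont_K; lra.
  - apply exR. lra. intros; apply cont_K; lra.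
Qed.


Lemma KA_0pi N : RInt (K (INR (S N) + 1/2)) 0 PI = PI/2.
Proof.
  assert (HPI := PI_RGT_0).
  assert (H := int_cos 0 0 PI N ltac:(lra)).
  assert (H2 : is_RInt (fun y => K (INR (S N) + 1/2) y - 1/2) 0 PI 0).
  { apply (is_RInt_ext (V:=R_NormedModule) (fun y => sum_n (fun n => cos ((INR (S n) + 0) * y)) N)).
    - rewrite Rmin_left, Rmax_right by lra. intros y Hy.
      assert (Hs := half_pos_sin y ltac:(lra)).
      rewrite !K_eq by lra. assert (T := tele_cos 0 y N).
      rewrite Rplus_0_r, Rplus_0_l in T.
      replace (1/2*y) with (y/2) in T by field.
      apply (Rmult_eq_reg_l (2 * sin (y/2))); [|lra]. rewrite T. field. lra.
    - assert (HV : sum_n (fun n => (sin ((INR (S n) + 0) * PI) - sin ((INR (S n) + 0) * 0)) / (INR (S n) + 0)) N = 0).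
      { transitivity (sum_n (fun _ : nat => 0) N); [|apply sum_n_zero]. apply sum_n_ext. intros n. cbv beta.
        rewrite Rmult_0_r, sin_0, Rplus_0_r, sin_INR_PI. toR. field.
        rewrite S_INR. assert (H0 := pos_INR n). lra. }
      rewrite HV in H. exact H. }
  apply (is_RInt_unique (V:=R_CompleteNormedModule)) in H2.
  rewrite (RInt_minus (V:=R_CompleteNormedModule) (K _) (fun _ => 1/2)) in H2.
  - rewrite RInt_const in H2. set (X := RInt (K (INR (S N) + 1/2)) 0 PI) in *.
    unfold minus, plus, opp, scal in H2; simpl in H2.
    unfold mult in H2; simpl in H2. lra.
  - apply exR. lra. intros; apply cont_K; lra.
  - apply (ex_RInt_const (V:=R_NormedModule)).
Qed.

Definition E1 N := RInt (fun y => / (2 * sin (y/2)) * sin ((INR N + 3/2) * y + 0)) PI x.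
Definition E2 N := RInt (fun y => G2 mu y * sin ((INR N + 3/2) * y + 0)) 0 x.
Definition E3 N := RInt (fun y => K mu y * sin ((INR N + 3/2) * y + PI/2)) 0 x.

Lemma KM_split N : RInt (K (INR (S N) + mu + 1/2)) 0 x = PI/2 + E1 N + E2 N + E3 N.
Proof.
  assert (HPI := PI_RGT_0).
  set (A := INR (S N) + 1/2).
  assert (HA : INR N + 3/2 = A) by (unfold A; rewrite S_INR; field).
  unfold E1, E2, E3. rewrite HA.
  assert (Ex2 : ex_RInt (fun y => G2 mu y * sin (A * y + 0)) 0 x).
  { apply exR. lra. intros z Hz. apply cont_mul. apply cont_G2; lra. apply cont_sin_lin. }
  assert (Ex3 : ex_RInt (fun y => K mu y * sin (A * y + PI/2)) 0 x).
  { apply exR. lra. intros z Hz. apply cont_mul. apply cont_K; lra. apply cont_sin_lin. }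
  assert (ExA : forall a b, 0 <= a <= b -> b < 2*PI -> ex_RInt (K A) a b).
  { intros a b Ha Hb. apply exR. lra. intros z Hz. apply cont_K; lra. }
  rewrite (RInt_ext (V:=R_CompleteNormedModule) _ (fun y => K A y + (G2 mu y * sin (A * y + 0) + K mu y * sin (A * y + PI/2)))).
  2:{ rewrite Rmin_left, Rmax_right by lra. intros y Hy.
      assert (Hs := half_pos_sin y ltac:(lra)).
      rewrite !K_eq, G2_eq by lra.
      rewrite sin_shift2, Rplus_0_r.
      replace ((INR (S N) + mu + 1/2) * y) with (A * y + mu * y) by (unfold A; ring).
      rewrite sin_plus. toR. field. lra. }
  rewrite (RInt_plus (V:=R_CompleteNormedModule) (K A)).
  2:{ apply ExA; lra. }
  2:{ apply (ex_RInt_plus (V:=R_NormedModule)); auto. }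
  rewrite (RInt_plus (V:=R_CompleteNormedModule)) by auto.
  unfold plus; simpl.
  rewrite <- (RInt_Chasles (V:=R_CompleteNormedModule) (K A) 0 PI x).
  2:{ apply ExA; lra. }
  2:{ apply exRm. intros z Hz. apply cont_K.
      assert (Rmin PI x > 0) by (apply Rmin_glb_lt; lra).
      assert (Rmax PI x < 2*PI) by (apply Rmax_lub_lt; lra). lra. }
  unfold plus; simpl. unfold A at 1. rewrite KA_0pi.
  rewrite (RInt_ext (V:=R_CompleteNormedModule) (K A) (fun y => / (2 * sin (y/2)) * sin (A * y + 0)) PI x).
  ring.
  intros y Hy.
  assert (Rmin PI x > 0) by (apply Rmin_glb_lt; lra).
  assert (Rmax PI x < 2*PI) by (apply Rmax_lub_lt; lra).
  assert (Hs := half_pos_sin y ltac:(lra)).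
  rewrite K_eq by lra. rewrite Rplus_0_r. toR. field. lra.
Qed.


Lemma IN_lim : is_lim_seq (fun N => sum_n (fun n => sin ((INR (S n) + mu) * x) / (INR (S n) + mu)) N)
  (PI/2 - RInt (K (mu+1/2)) 0 x).
Proof.
  assert (HPI := PI_RGT_0).
  apply is_lim_seq_ext with (fun N => PI/2 + E1 N + E2 N + E3 N - RInt (K (mu+1/2)) 0 x).
  { intros N. rewrite IN_eq, KM_split. reflexivity. }
  replace (PI/2 - RInt (K (mu+1/2)) 0 x) with (PI/2 + 0 + 0 + 0 - RInt (K (mu+1/2)) 0 x) by ring.
  apply is_lim_seq_minus'; [|apply is_lim_seq_const].
  apply is_lim_seq_plus'; [apply is_lim_seq_plus'; [apply is_lim_seq_plus'|]|].
  - apply is_lim_seq_const.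
  - unfold E1. apply (RL_seq' _ PI x (Rmin PI x / 2)).
    + assert (Rmin PI x > 0) by (apply Rmin_glb_lt; lra). lra.
    + intros y Hy. apply cont_invD.
      assert (Rmin PI x > 0) by (apply Rmin_glb_lt; lra).
      assert (Rmax PI x < 2*PI) by (apply Rmax_lub_lt; lra). lra.
  - unfold E2. apply (RL_seq _ 0 x 1). lra. lra. intros y Hy. apply cont_G2. assert (H3 := PI2_3_2). lra.
  - unfold E3. apply (RL_seq _ 0 x 1). lra. lra. intros y Hy. apply cont_K. assert (H3 := PI2_3_2). lra.
Qed.

End A.

Section B.
Variables mu x : R.
Hypothesis hmu : -1 < mu.
Hypothesis hx : 0 < x < 2*PI.

Definition RN z N := sum_n (fun n => cos ((INR (S n) + mu) * z) / (INR (S n) + mu)) N.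
Definition E4 N := RInt (fun y => / (2 * sin (y/2)) * sin ((INR N + (1 + mu + 1/2)) * y + PI/2)) x PI.

Lemma RN_diff N : RN x N - RN PI N = RInt (fun y => cos ((mu+1/2)*y) / (2 * sin (y/2))) x PI - E4 N.
Proof.
  assert (HPI := PI_RGT_0).
  assert (Hmin : Rmin x PI > 0) by (apply Rmin_glb_lt; lra).
  assert (Hmax : Rmax x PI < 2*PI) by (apply Rmax_lub_lt; lra).
  assert (H := int_sin mu x PI N hmu).
  assert (HV : sum_n (fun n => (cos ((INR (S n) + mu) * x) - cos ((INR (S n) + mu) * PI)) / (INR (S n) + mu)) N
     = RN x N - RN PI N).
  { unfold RN. replace (sum_n (fun n => cos ((INR (S n) + mu) * x) / (INR (S n) + mu)) N -
      sum_n (fun n => cos ((INR (S n) + mu) * PI) / (INR (S n) + mu)) N) with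
      (1 * sum_n (fun n => cos ((INR (S n) + mu) * x) / (INR (S n) + mu)) N +
      (-1) * sum_n (fun n => cos ((INR (S n) + mu) * PI) / (INR (S n) + mu)) N) by ring.
    rewrite <- sum_n_lin. apply sum_n_ext. intros n. cbv beta. toR. field.
    rewrite S_INR. assert (H0 := pos_INR n). lra. }
  rewrite HV in H. clear HV.
  unfold E4.
  assert (H2 : is_RInt (fun y => cos ((mu+1/2)*y) / (2 * sin (y/2)) -
       / (2 * sin (y/2)) * sin ((INR N + (1 + mu + 1/2)) * y + PI/2)) x PI (RN x N - RN PI N)).
  { apply (is_RInt_ext (V:=R_NormedModule) (fun y => sum_n (fun n => sin ((INR (S n) + mu) * y)) N)).
    - intros y Hy.
      assert (Hs := half_pos_sin y ltac:(lra)).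
      assert (T := tele_sin mu y N).
      rewrite sin_shift2. replace (INR N + (1 + mu + 1/2)) with (INR (S N) + mu + 1/2) by (rewrite S_INR; ring).
      apply (Rmult_eq_reg_l (2 * sin (y/2))); [|lra]. rewrite T. toR. field. lra.
    - exact H. }
  apply (is_RInt_unique (V:=R_CompleteNormedModule)) in H2. rewrite <- H2.
  apply (RInt_minus (V:=R_CompleteNormedModule)).
  - apply exRm. intros z Hz. unfold Rdiv. apply cont_mul.
    apply (cont_comp_d cos (fun y => (mu+1/2)*y)). auto_derive; auto. apply cont_cos.
    apply cont_invD. lra.
  - apply exRm. intros z Hz. apply cont_mul. apply cont_invD. lra. apply cont_sin_lin.
Qed.

Lemma RN_diff_lim : is_lim_seq (fun N => RN x N - RN PI N)
   (RInt (fun y => cos ((mu+1/2)*y) / (2 * sin (y/2))) x PI).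
Proof.
  assert (HPI := PI_RGT_0).
  apply is_lim_seq_ext with (fun N => RInt (fun y => cos ((mu+1/2)*y) / (2 * sin (y/2))) x PI - E4 N).
  { intros N. rewrite RN_diff. reflexivity. }
  set (J := RInt (fun y => cos ((mu+1/2)*y) / (2 * sin (y/2))) x PI).
  assert (HE : is_lim_seq E4 0).
  2:{ assert (L := is_lim_seq_minus' _ _ J 0 (is_lim_seq_const J) HE). rewrite Rminus_0_r in L. exact L. }
  unfold E4. apply (RL_seq' _ x PI (Rmin x PI / 2)).
  + assert (Rmin x PI > 0) by (apply Rmin_glb_lt; lra). lra.
  + intros y Hy. apply cont_invD.
    assert (Rmin x PI > 0) by (apply Rmin_glb_lt; lra).
    assert (Rmax x PI < 2*PI) by (apply Rmax_lub_lt; lra). lra.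
Qed.

End B.


Lemma sum_n_scal_R (u : nat -> R) al N : sum_n (fun n => al * u n) N = al * sum_n u N.
Proof.
  induction N as [|N IH]. rewrite !sum_O_R. reflexivity.
  rewrite !sum_Sn_R, IH. toR; ring.
Qed.

Lemma alt_ex mu : -1 < mu -> ex_series (fun n => cos (INR (S n) * PI) / (INR (S n) + mu)).
Proof.
  intros hmu.
  set (Un := fun n => / (INR (S n) + mu)).
  assert (Hpos : forall n, 0 < INR (S n) + mu) by (intros n; rewrite S_INR; assert (H0 := pos_INR n); lra).
  destruct (alternated_series Un) as [l Hl].
  - intros n. unfold Un. apply Rinv_le_contravar. apply Hpos. rewrite (S_INR (S n)). lra.
  - apply is_lim_seq_Reals.
    assert (H1 : is_lim_seq (fun n => INR (S n) + mu) p_infty).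
    { apply (is_lim_seq_plus _ _ p_infty mu p_infty).
      apply (is_lim_seq_incr_1 INR p_infty). apply is_lim_seq_INR.
      apply is_lim_seq_const. reflexivity. }
    assert (L := is_lim_seq_inv _ _ H1 ltac:(discriminate)). simpl in L. exact L.
  - exists (- l). apply is_series_Reals, is_lim_seq_Reals.
    apply is_lim_seq_ext with (u := sum_n (fun n => cos (INR (S n) * PI) / (INR (S n) + mu))).
    { intros N. apply sum_n_Reals. }
    apply is_lim_seq_Reals in Hl.
    assert (L := is_lim_seq_scal_l _ (-1) l Hl). simpl in L.
    replace (-l) with (-1 * l) by ring.
    apply is_lim_seq_ext with (u := fun N => -1 * sum_f_R0 (tg_alt Un) N); [|exact L].
    intros N. rewrite <- sum_n_Reals, <- sum_n_scal_R. apply sum_n_ext. intros n.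
    unfold tg_alt, Un. rewrite cos_INR_PI. simpl. unfold Rdiv. ring.
Qed.

Lemma series_lim (a : nat -> R) l : is_series a l -> is_lim_seq (sum_n a) l.
Proof.
  intros H. apply is_series_Reals, is_lim_seq_Reals in H.
  apply is_lim_seq_ext with (u := fun N => sum_f_R0 a N); auto.
  intros N. symmetry. apply sum_n_Reals.
Qed.

Lemma RN_PI_lim mu : -1 < mu -> is_lim_seq (RN mu PI) (cos (PI * mu) * T PI mu).
Proof.
  intros hmu.
  assert (HS := series_lim _ _ (Series_correct _ (alt_ex mu hmu))).
  assert (L := is_lim_seq_scal_l _ (cos (PI * mu)) _ HS).
  eapply is_lim_seq_ext; [|exact L].
  intros N. cbv beta. rewrite <- sum_n_scal_R. unfold RN. apply sum_n_ext. intros n.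
  rewrite Rmult_plus_distr_r, cos_plus, sin_INR_PI. rewrite (Rmult_comm mu PI). toR; field.
  rewrite S_INR. assert (H0 := pos_INR n). lra.
Qed.

Lemma lim_series (a : nat -> R) (l : R) : is_lim_seq (sum_n a) l -> is_series a l.
Proof.
  intros H. apply is_series_Reals, is_lim_seq_Reals.
  apply is_lim_seq_ext with (u := sum_n a). intros N; apply sum_n_Reals. exact H.
Qed.

Lemma lim_lin (u v : nat -> R) (a b al be : R) : is_lim_seq u a -> is_lim_seq v b ->
  is_lim_seq (fun n => al * u n + be * v n) (al * a + be * b).
Proof.
  intros Hu Hv. apply is_lim_seq_plus'; apply is_lim_seq_mult'; first [apply is_lim_seq_const | assumption].
Qed.

Lemma S_pi2_T mu : -1 < mu -> S_pi2 (2 * mu + 1) = - T PI mu.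
Proof.
  intros hmu. unfold S_pi2, T.
  rewrite (Series_ext _ (fun n => -1 * (/2 * (cos (INR (S n) * PI) / (INR (S n) + mu))))).
  - rewrite Series_scal_l, Series_scal_l. field.
  - intros n. rewrite cos_INR_PI. simpl pow. field.
    rewrite S_INR. assert (H0 := pos_INR n). lra.
Qed.

Theorem proposition7 (mu x : R) (hmu : -1 < mu) (hx : 0 < x < 2 * PI) :
  Im (Cmult (cis (x * mu)) (L x mu))
    + RInt (fun y => sin ((mu + 1/2) * y) / (2 * sin (y / 2))) 0 x = PI / 2
  /\
  Re (Cmult (cis (x * mu)) (L x mu))
    - RInt (fun y => cos ((mu + 1/2) * y) / (2 * sin (y / 2))) x PI
    = Re (Cmult (cis (PI * mu)) (RtoC (T PI mu)))
  /\
  Re (Cmult (cis (PI * mu)) (RtoC (T PI mu))) = - S_pi2 (2 * mu + 1) * cos (PI * mu).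
Proof.
  assert (HPI := PI_RGT_0).
  set (J := RInt (fun y => cos ((mu + 1/2) * y) / (2 * sin (y / 2))) x PI).
  set (Iinf := PI/2 - RInt (K (mu+1/2)) 0 x).
  set (Rinf := cos (PI * mu) * T PI mu + J).
  assert (HI := IN_lim mu x hmu hx). fold Iinf in HI.
  assert (HR : is_lim_seq (RN mu x) Rinf).
  { assert (L1 := is_lim_seq_plus' _ _ _ _ (RN_diff_lim mu x hmu hx) (RN_PI_lim mu hmu)).
    fold J in L1. unfold Rinf. rewrite Rplus_comm.
    apply is_lim_seq_ext with (u := fun N => RN mu x N - RN mu PI N + RN mu PI N); auto.
    intros N. ring. }
  assert (Hc : forall n, INR (S n) + mu <> 0).
  { intros n. rewrite S_INR. assert (H0 := pos_INR n). lra. }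
  assert (HT : T x mu = cos (x*mu) * Rinf + sin (x*mu) * Iinf).
  { unfold T. apply is_series_unique, lim_series.
    apply is_lim_seq_ext with (u := fun N => cos (x*mu) * RN mu x N + sin (x*mu) *
       sum_n (fun n => sin ((INR (S n) + mu) * x) / (INR (S n) + mu)) N).
    - intros N. unfold RN. rewrite <- sum_n_lin. apply sum_n_ext. intros n.
      replace (INR (S n) * x) with ((INR (S n) + mu) * x - x * mu) by ring.
      rewrite cos_minus. toR. field. apply Hc.
    - apply lim_lin; auto. }
  assert (HTs : Tsin x mu = - sin (x*mu) * Rinf + cos (x*mu) * Iinf).
  { unfold Tsin. apply is_series_unique, lim_series.
    apply is_lim_seq_ext with (u := fun N => - sin (x*mu) * RN mu x N + cos (x*mu) *
       sum_n (fun n => sin ((INR (S n) + mu) * x) / (INR (S n) + mu)) N).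
    - intros N. unfold RN. rewrite <- sum_n_lin. apply sum_n_ext. intros n.
      replace (INR (S n) * x) with ((INR (S n) + mu) * x - x * mu) by ring.
      rewrite sin_minus. toR. field. apply Hc.
    - apply lim_lin; auto. }
  assert (Hsc := sin2_cos2 (x*mu)). unfold Rsqr in Hsc.
  unfold Cmult, cis, L, Re, Im, RtoC. cbn [fst snd].
  rewrite HT, HTs.
  assert (E1 : forall R0 I0, cos (x*mu) * (- sin (x*mu) * R0 + cos (x*mu) * I0) +
     sin (x*mu) * (cos (x*mu) * R0 + sin (x*mu) * I0) = I0 * (sin (x*mu) * sin (x*mu) + cos (x*mu) * cos (x*mu))).
  { intros; ring. }
  assert (E2 : forall R0 I0, cos (x*mu) * (cos (x*mu) * R0 + sin (x*mu) * I0) -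
     sin (x*mu) * (- sin (x*mu) * R0 + cos (x*mu) * I0) = R0 * (sin (x*mu) * sin (x*mu) + cos (x*mu) * cos (x*mu))).
  { intros; ring. }
  rewrite E1, E2, Hsc.
  split; [|split].
  - rewrite (RInt_ext (V:=R_CompleteNormedModule) _ (K (mu + 1/2))).
    + unfold Iinf. ring.
    + rewrite Rmin_left, Rmax_right by lra. intros y Hy.
      assert (Hs := half_pos_sin y ltac:(lra)). rewrite K_eq by lra. reflexivity.
  - fold J. unfold Rinf. ring.
  - rewrite S_pi2_T by auto. ring.
Qed.
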